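(* Let $k$ be a field, $(C,\Delta)$ a coassociative coalgebra over $k$, $(L,\phi)$ a Lie algebra, and $B$ a Lie module over $L$ via $\psi:L\otimes B\to B$, i.e. $\psi(\phi(x_1,x_2),b)=\psi(x_1,\psi(x_2,b))-\psi(x_2,\psi(x_1,b))$. Let $\Phi(f\otimes g)(c)=\sum\phi(f(c_{(1)}),g(c_{(2)}))$ and $\Psi:Hom(C,L)\otimes Hom(C,B)\to Hom(C,B)$, $\Psi(g\otimes\beta)(c)=\sum\psi(g(c_{(1)}),\beta(c_{(2)}))$. Then $Hom(C,B)$ is a module over the TD Lie algebra $(Hom(C,L),\Phi)$, i.e. $$\Psi\circ(\Phi\otimes1)=\Psi\circ(1\otimes\Psi)-(\Psi\circ(1\otimes\Psi))^{\tau}\circ\tau,\quad\tau=(1\,2)\in S_3;$$ explicitly, for all $f,g\in Hom(C,L)$, $\beta\in Hom(C,B)$, $c\in C$, $$\sum\psi(\phi(f(c_{(1)}),g(c_{(2)})),\beta(c_{(3)}))=\sum\Big(\psi(f(c_{(1)}),\psi(g(c_{(2)}),\beta(c_{(3)})))-\psi(g(c_{(2)}),\psi(f(c_{(1)}),\beta(c_{(3)})))\Big).$$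
   Context: Sweedler notation $\Delta(c)=\sum c_{(1)}\otimes c_{(2)}$, $((\Delta\otimes1)\circ\Delta)(c)=\sum c_{(1)}\otimes c_{(2)}\otimes c_{(3)}$. $\tau$ acts on $Hom(C,L)\otimes Hom(C,L)\otimes Hom(C,B)$ and on $C^{\otimes3}$ by swapping the first two factors; $(\Psi\circ(1\otimes\Psi))^\tau(g_1\otimes g_2\otimes\beta)=\psi\circ(1\otimes\psi)\circ(g_1\otimes g_2\otimes\beta)\circ\tau\circ\Delta^{(2)}$ with $\Delta^{(2)}=(\Delta\otimes1)\circ\Delta$. *)

(* Defs.v *)
From HB Require Import structures.
From mathcomp Require Import all_boot all_order all_algebra.
Set Implicit Arguments. Unset Strict Implicit. Unset Printing Implicit Defensive.
Import GRing.Theory.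
Local Open Scope ring_scope.

Section Defs.
Variable k : fieldType.

Definition is_lin (V W : lmodType k) (h : V -> W) : Prop :=
  forall (a : k) (x y : V), h (a *: x + y) = a *: h x + h y.

Definition is_bilin (U V W : lmodType k) (T : U -> V -> W) : Prop :=
  (forall y, is_lin (fun x => T x y)) /\ (forall x, is_lin (T x)).

Definition is_trilin (U V X W : lmodType k) (T : U -> V -> X -> W) : Prop :=
  [/\ forall y z, is_lin (fun x => T x y z),
      forall x z, is_lin (fun y => T x y z) &
      forall x y, is_lin (T x y)].

(* A comultiplication is represented in Sweedler form: Delta c is a finite
   list of pairs (c_(1), c_(2)) with Delta(c) = sum c_(1) (x) c_(2).  Since
   no tensor product is available, equalities in C(x)C and C(x)C(x)C are
   expressed through the universal property (testing against all bi/trilinear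
   maps into any k-module). *)
Variable C : lmodType k.

Definition sweedler2 (Delta : C -> seq (C * C)) (W : lmodType k)
  (T : C -> C -> W) (c : C) : W :=
  \sum_(p <- Delta c) T p.1 p.2.

(* ((Delta (x) 1) o Delta)(c) = sum c_(1) (x) c_(2) (x) c_(3), tested by T *)
Definition sweedler3 (Delta : C -> seq (C * C)) (W : lmodType k)
  (T : C -> C -> C -> W) (c : C) : W :=
  \sum_(p <- Delta c) \sum_(q <- Delta p.1) T q.1 q.2 p.2.

(* ((1 (x) Delta) o Delta)(c), tested by T *)
Definition sweedler3' (Delta : C -> seq (C * C)) (W : lmodType k)
  (T : C -> C -> C -> W) (c : C) : W :=
  \sum_(p <- Delta c) \sum_(q <- Delta p.2) T p.1 q.1 q.2.

Definition coassoc_coalgebra (Delta : C -> seq (C * C)) : Prop :=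
  (* Delta is k-linear C -> C (x) C *)
  (forall (W : lmodType k) (T : C -> C -> W), is_bilin T ->
     is_lin (sweedler2 Delta T)) /\
  (forall (W : lmodType k) (T : C -> C -> C -> W), is_trilin T ->
     forall c, sweedler3 Delta T c = sweedler3' Delta T c).

End Defs.

Section Lie.
Variable k : fieldType.

Definition lie_algebra (L : lmodType k) (phi : L -> L -> L) : Prop :=
  [/\ is_bilin phi,
      forall x, phi x x = 0 &
      forall x y z, phi x (phi y z) + phi y (phi z x) + phi z (phi x y) = 0].

Definition lie_module (L B : lmodType k) (phi : L -> L -> L)
  (psi : L -> B -> B) : Prop :=
  is_bilin psi /\
  forall x1 x2 b, psi (phi x1 x2) b = psi x1 (psi x2 b) - psi x2 (psi x1 b).

Definition convPhi (C L : lmodType k) (Delta : C -> seq (C * C))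
  (phi : L -> L -> L) (f g : C -> L) : C -> L :=
  sweedler2 Delta (fun u v => phi (f u) (g v)).

Definition convPsi (C L B : lmodType k) (Delta : C -> seq (C * C))
  (psi : L -> B -> B) (g : C -> L) (beta : C -> B) : C -> B :=
  sweedler2 Delta (fun u v => psi (g u) (beta v)).

End Lie.

(* Main.v *)
Require Import Defs.
From HB Require Import structures.
From mathcomp Require Import all_boot all_order all_algebra.
Import GRing.Theory.
Local Open Scope ring_scope.

Lemma lin_add {k : fieldType} {V W : lmodType k} {h : V -> W} :
  is_lin h -> forall x y, h (x + y) = h x + h y.
Proof. by move=> H x y; rewrite -[x in LHS]scale1r H scale1r. Qed.

Lemma lin_0 {k : fieldType} {V W : lmodType k} {h : V -> W} :
  is_lin h -> h 0 = 0.
Proof.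
move=> H; have := lin_add H 0 0; rewrite addr0 => E.
by apply: (addrI (h 0)); rewrite addr0 -E.
Qed.

Lemma lin_sum {k : fieldType} {V W : lmodType k} {h : V -> W} {I} (s : seq I) (F : I -> V) :
  is_lin h -> h (\sum_(i <- s) F i) = \sum_(i <- s) h (F i).
Proof.
move=> H; apply: (big_morph h); [exact: lin_add | exact: lin_0].
Qed.

Theorem proposition5 (k : fieldType) (C L B : lmodType k)
  (Delta : C -> seq (C * C)) (phi : L -> L -> L) (psi : L -> B -> B)
  (HC : coassoc_coalgebra Delta) (HL : lie_algebra phi)
  (HB : lie_module phi psi)
  (f g : {linear C -> L}) (beta : {linear C -> B}) (c : C) :
  (* operadic form: Psi o (Phi (x) 1) = Psi o (1 (x) Psi) - (Psi o (1 (x) Psi))^tau o tau *)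
  convPsi Delta psi (convPhi Delta phi f g) beta c =
    convPsi Delta psi f (convPsi Delta psi g beta) c
    - sweedler3 Delta (fun u v w => psi (g v) (psi (f u) (beta w))) c
  /\
  (* explicit Sweedler form *)
  sweedler3 Delta (fun u v w => psi (phi (f u) (g v)) (beta w)) c =
    sweedler3 Delta (fun u v w =>
      psi (f u) (psi (g v) (beta w)) - psi (g v) (psi (f u) (beta w))) c.
Proof.
case: HB => [[Hp1 Hp2] Hmod].
have E2 : sweedler3 Delta (fun u v w => psi (phi (f u) (g v)) (beta w)) c =
    sweedler3 Delta (fun u v w =>
      psi (f u) (psi (g v) (beta w)) - psi (g v) (psi (f u) (beta w))) c.
  by rewrite /sweedler3; apply: eq_bigr => p _; apply: eq_bigr => q _; rewrite Hmod.
split => //.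
have tri : is_trilin (fun u v w => psi (f u) (psi (g v) (beta w))).
  split.
  - by move=> y z a x1 x2 /=; rewrite linearP Hp1.
  - by move=> x z a x1 x2 /=; rewrite linearP Hp1 Hp2.
  - by move=> x y a x1 x2 /=; rewrite linearP !Hp2.
have L1 : convPsi Delta psi (convPhi Delta phi f g) beta c =
    sweedler3 Delta (fun u v w => psi (phi (f u) (g v)) (beta w)) c.
  rewrite /convPsi /convPhi /sweedler2 /sweedler3; apply: eq_bigr => p _.
  by rewrite (lin_sum _ _ (Hp1 _)).
have L2 : convPsi Delta psi f (convPsi Delta psi g beta) c =
    sweedler3 Delta (fun u v w => psi (f u) (psi (g v) (beta w))) c.
  rewrite (HC.2 _ _ tri) /convPsi /sweedler2 /sweedler3'; apply: eq_bigr => p _.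
  by rewrite (lin_sum _ _ (Hp2 _)).
rewrite L1 E2 L2 /sweedler3 -sumrB; apply: eq_bigr => p _; by rewrite -sumrB.
Qed.
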